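(* In Ruleset C', let $G=\langle \mathrm{Nim}(i_1),\ldots,\mathrm{Nim}(i_\ell)\rangle_{C'}$ and $k=\max_{1\le j\le\ell} i_j$. Then, taking the first applicable case, \[G\equiv\begin{cases} 0 & \text{if } G=\langle\mathrm{Nim}(1),\mathrm{Nim}(2)\rangle_{C'} \text{ or } G=\langle\mathrm{Nim}(0),\mathrm{Nim}(1),\mathrm{Nim}(2)\rangle_{C'},\\ * & \text{if } k=1,\\ *(k-1) & \text{if } k-1\in\{i_1,\ldots,i_\ell\},\\ *k & \text{otherwise.}\end{cases}\] Equivalently: $G$ has value $*k$ unless $\mathrm{Nim}(k-1)$ belongs to the superposition, in which case it has value $*(k-1)$, with the only exceptions $\langle\mathrm{Nim}(0),\mathrm{Nim}(1)\rangle_{C'}\equiv *$ and $\langle\mathrm{Nim}(1),\mathrm{Nim}(2)\rangle_{C'}\equiv 0$ (and likewise $\langle\mathrm{Nim}(0),\mathrm{Nim}(1),\mathrm{Nim}(2)\rangle_{C'}\equiv 0$).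
   Context: Single-heap Nim: $\mathrm{Nim}(x)$ is a heap of $x$ tokens; classical move $(1,-j)$, $j\ge1$, removes $j$ tokens and is illegal if fewer than $j$ tokens remain. Quantum variation: a position is a nonempty finite set $\langle G_1,\ldots,G_n\rangle$ of distinct classical positions; a classical move is legal if legal in some $G_i$; a Q-move is a nonempty set of legal classical moves, leading to the superposition of all legal results of applying one of its moves to one of the $G_i$. Ruleset C' (subscript $C'$): Q-moves of at least two distinct classical moves are allowed; an unsuperposed (single) move is allowed if and only if it is legal in every $G_i$ in which the player still has at least one legal classical move. The player with no allowed Q-move loses. $\equiv$ is game equivalence, $*k$ the value of a classical Nim heap of $k$ tokens, $*=*1$, $*0=0$. *)

(* Defs.v *)
From mathcomp Require Import all_boot.
Set Implicit Arguments. Unset Strict Implicit. Unset Printing Implicit Defensive.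

(* A (quantum) position <Nim(i_1),...,Nim(i_l)> is represented by the list
   S = [:: i_1; ...; i_l] of heap sizes (nonempty, duplicate-free);
   only membership matters. *)

Definition hmax (S : seq nat) : nat := foldr maxn 0 S.

(* classical move j is legal in the superposition S: legal in some G_i *)
Definition legal_move (S : seq nat) (j : nat) : bool := (0 < j) && (j <= hmax S).

(* result of the Q-move M (a set of classical moves, as a list): the
   superposition of all legal results of applying one move of M to one G_i *)
Definition qresult (S M : seq nat) : seq nat :=
  undup [seq i - j | i <- S, j <- [seq j <- M | j <= i]].

(* Ruleset C': Q-moves with at least two distinct classical moves are allowed;
   an unsuperposed move j is allowed iff it is legal in every G_i in which the
   player still has a legal classical move (i.e. every i >= 1). *)
Definition allowedC' (S M : seq nat) : bool :=
  [&& M != [::], uniq M, all (legal_move S) M &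
   (if M is [:: j] then all (fun i => (0 < i) ==> (j <= i)) S else true)].

Fixpoint subseqs (s : seq nat) : seq (seq nat) :=
  if s is x :: s' then let r := subseqs s' in r ++ map (cons x) r else [:: [::]].

Definition qmoves (S : seq nat) : seq (seq nat) :=
  [seq M <- subseqs (iota 1 (hmax S)) | allowedC' S M].

Definition mex (s : seq nat) : nat :=
  nth 0 [seq n <- iota 0 (size s).+1 | n \notin s] 0.

(* Grundy value with fuel; every Q-move strictly decreases hmax, so fuel
   (hmax S).+1 suffices *)
Fixpoint grundy_fuel (f : nat) (S : seq nat) : nat :=
  if f is f'.+1 then mex [seq grundy_fuel f' (qresult S M) | M <- qmoves S]
  else 0.

(* Grundy value of the position S; by Sprague-Grundy, S is equivalent to
   *(grundy S). *)
Definition grundy (S : seq nat) : nat := grundy_fuel (hmax S).+1 S.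

(* Main.v *)
Require Import Defs.
From mathcomp Require Import all_boot zify.
Set Implicit Arguments. Unset Strict Implicit. Unset Printing Implicit Defensive.

Lemma hmax_ub (s : seq nat) x : x \in s -> x <= hmax s.
Proof.
elim: s => //= y s IH; rewrite in_cons => /orP[/eqP->|/IH h].
  exact: leq_maxl.
exact: leq_trans h (leq_maxr _ _).
Qed.

Lemma hmax_le (s : seq nat) B : (forall x, x \in s -> x <= B) -> hmax s <= B.
Proof.
elim: s => //= y s IH H; rewrite geq_max H ?mem_head //=.
by apply: IH => x hx; apply: H; rewrite in_cons hx orbT.
Qed.

Lemma hmax_mem (s : seq nat) : s != [::] -> hmax s \in s.
Proof.
elim: s => // y s IH _; case: s IH => [|z s] IH; first by rewrite /= maxn0 mem_seq1.
have -> : hmax (y :: z :: s) = maxn y (hmax (z::s)) by [].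
rewrite in_cons.
move: (hmax (z::s)) (IH isT) => m h.
by rewrite /maxn; case: ifP => _; rewrite ?eqxx // h orbT.
Qed.

Lemma hmax_pos (s : seq nat) : 0 < hmax s -> hmax s \in s.
Proof. by case: s => // ? ? _; apply: hmax_mem. Qed.

Lemma hmax_eq (s : seq nat) K : K \in s -> (forall x, x \in s -> x <= K) -> hmax s = K.
Proof.
move=> h1 h2; apply/eqP; rewrite eqn_leq hmax_le //=; exact: hmax_ub.
Qed.

Lemma mexP (s : seq nat) v : (forall u, u < v -> u \in s) -> v \notin s -> mex s = v.
Proof.
move=> H1 H2.
have Hv : v <= size s.
  have: size (iota 0 v) <= size (undup s).
    apply: uniq_leq_size; first exact: iota_uniq.
    by move=> x; rewrite mem_iota mem_undup => /andP[_]; apply: H1.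
  rewrite size_iota => h; exact: leq_trans h (size_undup s).
rewrite /mex.
have ->: (size s).+1 = v + (size s - v).+1 by lia.
rewrite iotaD filter_cat add0n.
rewrite (@eq_in_filter _ _ pred0); last first.
  by move=> x; rewrite mem_iota /= => h; rewrite H1.
by rewrite filter_pred0 /= H2.
Qed.

Lemma mem_qresult (S M : seq nat) x :
  reflect (exists i j, [/\ i \in S, j \in M, j <= i & x = i - j]) (x \in qresult S M).
Proof.
rewrite /qresult mem_undup; apply: (iffP allpairsPdep).
  by move=> [i [j [hi]]]; rewrite mem_filter => /andP[hj1 hj2] ->; exists i, j.
by move=> [i [j [hi hj hji ->]]]; exists i, j; rewrite mem_filter hji hj.
Qed.

Lemma mem_subseqs (s M : seq nat) : subseq M s -> M \in subseqs s.
Proof.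
elim: s M => [|x s IH] M; first by rewrite subseq0 => /eqP->; rewrite mem_seq1.
rewrite /= mem_cat; case: M => [|y M]; first by rewrite IH // sub0seq.
rewrite /=; case: eqP => [->|_] h.
  by rewrite (map_f (cons x)) ?orbT // IH.
by rewrite IH.
Qed.

Lemma qmoves_lt (T M : seq nat) : M \in qmoves T -> hmax (qresult T M) < hmax T.
Proof.
rewrite mem_filter => /andP[/and4P[hne _ hall _] _].
have hj : forall j, j \in M -> 0 < j <= hmax T.
  by move=> j hj; move/allP: hall => /(_ j hj); rewrite /legal_move.
case: M hne hj {hall} => // j0 M _ hj.
have := hj j0 (mem_head _ _) => /andP[h0 h1].
have: hmax (qresult T (j0 :: M)) <= hmax T - 1.
  apply: hmax_le => x /mem_qresult [i [j [hi hjM hji ->]]].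
  have := hmax_ub hi; have := hj j hjM; lia.
lia.
Qed.

Lemma fuel_key f1 f2 T : hmax T < f1 -> hmax T < f2 ->
    grundy_fuel f1 T = grundy_fuel f2 T.
Proof.
elim: f1 f2 T => [|f1 IH] [|f2] T0 //= h1 h2.
congr mex; apply/eq_in_map => M hM.
have := qmoves_lt hM => hlt.
apply: IH; lia.
Qed.

Lemma fuelE f T : hmax T < f -> grundy_fuel f T = grundy T.
Proof. by move=> h; apply: fuel_key. Qed.

Definition G (K : nat) (b : bool) : nat :=
  if K == 0 then 0 else if K == 1 then 1 else
  if K == 2 then (if b then 0 else 2) else (if b then K.-1 else K).

Definition Hv (T : seq nat) := G (hmax T) ((hmax T).-1 \in T).

Lemma G_le K b : G K b <= K.
Proof. rewrite /G; case: K => [|[|[|K]]] //=; case: b => //. Qed.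

Lemma qmoves_facts (S M : seq nat) : M \in qmoves S ->
  [/\ M != [::], uniq M, (forall j, j \in M -> 0 < j <= hmax S) &
      (if M is [:: j] then all (fun i => (0 < i) ==> (j <= i)) S else true)].
Proof.
rewrite mem_filter => /andP[/and4P[hne hu hall hs] _]; split => //.
by move=> j hj; move/allP: hall => /(_ j hj); rewrite /legal_move.
by case: M hne hu hall hs => // j [|? ?].
Qed.

Lemma res_hmax (S M : seq nat) m : hmax S \in S -> m \in M -> m <= hmax S ->
  (forall j, j \in M -> m <= j) -> hmax (qresult S M) = hmax S - m.
Proof.
move=> hk hm hmk hmin; apply: hmax_eq.
  by apply/mem_qresult; exists (hmax S), m.
move=> x /mem_qresult [i [j [hi hj hji ->]]].
have := hmax_ub hi; have := hmin j hj; lia.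
Qed.

Lemma pair_in (S : seq nat) a c : 0 < a < c -> c <= hmax S -> [:: a; c] \in qmoves S.
Proof.
move=> hac hc; rewrite mem_filter; apply/andP; split.
  rewrite /allowedC' /= /legal_move inE andbT.
  have -> : (a == c) = false by apply/eqP; lia.
  have -> : 0 < a <= hmax S by apply/andP; lia.
  have -> : 0 < c <= hmax S by apply/andP; lia.
  by [].
apply: mem_subseqs.
have -> : hmax S = (a - 1) + (hmax S - a).+1 by lia.
rewrite iotaD.
have -> : 1 + (a - 1) = a by lia.
rewrite -[[:: a; c]]cat0s; apply: cat_subseq; first exact: sub0seq.
rewrite /= eqxx sub1seq mem_iota; apply/andP; lia.
Qed.

Lemma single_in (S : seq nat) j : 0 < j <= hmax S ->
  all (fun i => (0 < i) ==> (j <= i)) S -> [:: j] \in qmoves S.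
Proof.
move=> hj hall; rewrite mem_filter; apply/andP; split.
  by rewrite /allowedC' /= /legal_move hj hall.
apply: mem_subseqs.
have -> : hmax S = (j - 1) + (hmax S - j).+1 by lia.
rewrite iotaD.
have -> : 1 + (j - 1) = j by lia.
rewrite -[[:: j]]cat0s; apply: cat_subseq; first exact: sub0seq.
by rewrite /= eqxx sub0seq.
Qed.

Lemma in_map_pair (S : seq nat) a c u : 0 < a < c -> c <= hmax S -> hmax S \in S ->
  G (hmax S - a) ((hmax S - a).-1 \in qresult S [:: a; c]) = u ->
  u \in [seq Hv (qresult S M) | M <- qmoves S].
Proof.
move=> hac hc hk hG; apply/mapP; exists [:: a; c]; first exact: pair_in.
rewrite /Hv (@res_hmax _ _ a) //; first by rewrite inE eqxx.
  lia.
by move=> j; rewrite !inE => /orP[/eqP->|/eqP->]; lia.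
Qed.

Lemma in_map_single (S : seq nat) j u : 0 < j <= hmax S -> hmax S \in S ->
  all (fun i => (0 < i) ==> (j <= i)) S ->
  G (hmax S - j) ((hmax S - j).-1 \in qresult S [:: j]) = u ->
  u \in [seq Hv (qresult S M) | M <- qmoves S].
Proof.
move=> hj hk hall hG; apply/mapP; exists [:: j]; first exact: single_in.
rewrite /Hv (@res_hmax _ _ j) //; first by rewrite inE eqxx.
  lia.
by move=> i; rewrite !inE => /eqP->.
Qed.

Lemma hmax_memeq (s t : seq nat) : s =i t -> hmax s = hmax t.
Proof.
move=> e; apply/eqP; rewrite eqn_leq; apply/andP; split; apply: hmax_le => x hx;
  apply: hmax_ub; by rewrite ?e // -e.
Qed.

Lemma exc (T : seq nat) : uniq T -> hmax T = 2 -> 1 \in T ->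
  perm_eq T [:: 1; 2] || perm_eq T [:: 0; 1; 2].
Proof.
move=> uT hT h1.
have h2 : 2 \in T by rewrite -hT hmax_pos // hT.
have hle : forall x, x \in T -> x <= 2 by move=> x /hmax_ub; rewrite hT.
apply/orP; case h0: (0 \in T); [right|left]; apply: uniq_perm => // x;
  rewrite !inE; apply/idP/idP.
- move=> hx; have := hle x hx; case: x hx => [|[|[|x]]] //.
- by move=> /or3P[] /eqP ->.
- move=> hx; have := hle x hx; case: x hx => [|[|[|x]]] //; by rewrite h0.
- by move=> /orP[] /eqP ->.
Qed.

Lemma F_char (T : seq nat) : uniq T ->
  (if perm_eq T [:: 1; 2] || perm_eq T [:: 0; 1; 2] then 0
   else if hmax T == 1 then 1
   else if (hmax T - 1) \in T then hmax T - 1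
   else hmax T) = Hv T.
Proof.
move=> uT; rewrite /Hv /G subn1.
case: ifP => hp.
  have [hm h1] : hmax T = 2 /\ 1 \in T.
    by case/orP: hp => /perm_mem e; rewrite (hmax_memeq e) e.
  by rewrite hm h1.
have := @exc T uT.
case: (hmax T) => [|[|[|K]]] //=.
- by case: ifP.
- by rewrite hp; case: (1 \in T) => // /(_ erefl isT).
Qed.

Lemma G_ge3 K b : 3 <= K -> G K b = if b then K.-1 else K.
Proof. by case: K => [|[|[|K]]]. Qed.

Lemma reach (S : seq nat) u : u < Hv S ->
  u \in [seq Hv (qresult S M) | M <- qmoves S].
Proof.
rewrite /Hv; move Ek: (hmax S) => k.
case: k Ek => [|k] Ek //.
have hkS : hmax S \in S by rewrite hmax_pos // Ek.
rewrite Ek in hkS.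
case: k Ek hkS => [|k] Ek hkS.
  rewrite /G /= ltnS leqn0 => /eqP ->.
  apply: (@in_map_single _ 1); rewrite ?Ek //.
  by apply/allP => i _; apply/implyP.
case: k Ek hkS => [|k] Ek hkS.
  case Eb: (1.+1.-1 \in S); rewrite /G /= => // hu.
  have [->|->] : u = 0 \/ u = 1 by lia.
  - apply: (@in_map_single _ 2); rewrite ?Ek //.
    apply/allP => i hi; apply/implyP => hi0; have := hmax_ub hi; rewrite Ek.
    case: (i =P 1) hi => [-> | ne]; first by rewrite Eb.
    lia.
  - by apply: (@in_map_pair _ 1 2); rewrite ?Ek.
set k3 := k.+3.
have h3 : 3 <= k3 by [].
rewrite G_ge3 //.
have [hk1 hk2] : k3.-1 = k3 - 1 /\ True by split => //; lia.
case Eb: (k3.-1 \in S) => hu.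
- have [->|[->|hu2]] : u = 0 \/ u = 1 \/ 2 <= u by lia.
  + apply: (@in_map_pair _ (k3 - 2) k3); rewrite ?Ek //; try lia.
    rewrite (_ : k3 - (k3 - 2) = 2); last lia.
    rewrite (_ : 2.-1 \in _ = true) //.
    apply/mem_qresult; exists k3.-1, (k3 - 2); rewrite !inE eqxx; split => //; lia.
  + apply: (@in_map_pair _ (k3 - 1) k3); rewrite ?Ek //; try lia.
    by rewrite (_ : k3 - (k3 - 1) = 1); last lia.
  + apply: (@in_map_pair _ (k3 - u - 1) k3); rewrite ?Ek //; try lia.
    rewrite (_ : k3 - (k3 - u - 1) = u.+1); last lia.
    rewrite G_ge3; last lia.
    rewrite (_ : u.+1.-1 \in _ = true) //.
    apply/mem_qresult; exists k3.-1, (k3 - u - 1); rewrite !inE eqxx; split => //; lia.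
- have [->|[->|hu2]] : u = 0 \/ u = 1 \/ 2 <= u by lia.
  + apply: (@in_map_pair _ (k3 - 2) (k3 - 1)); rewrite ?Ek //; try lia.
    rewrite (_ : k3 - (k3 - 2) = 2); last lia.
    rewrite (_ : 2.-1 \in _ = true) //.
    apply/mem_qresult; exists k3, (k3 - 1); split; [exact: hkS | by rewrite !inE eqxx orbT | lia | lia].
  + apply: (@in_map_pair _ (k3 - 1) k3); rewrite ?Ek //; try lia.
    by rewrite (_ : k3 - (k3 - 1) = 1); last lia.
  + apply: (@in_map_pair _ (k3 - u) k3); rewrite ?Ek //; try lia.
    rewrite (_ : k3 - (k3 - u) = u); last lia.
    rewrite (_ : u.-1 \in _ = false).
      by case: u hu hu2 => [|[|[|u]]].
    apply/negP => /mem_qresult [i [j [hi hj hji e]]].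
    move: hj; rewrite !inE => /orP[] /eqP ej.
    * have ei : i = k3.-1 by have := hmax_ub hi; rewrite Ek; lia.
      by move: hi; rewrite ei Eb.
    * have := hmax_ub hi; rewrite Ek; lia.
Qed.

Lemma no_self (S M : seq nat) : M \in qmoves S -> Hv (qresult S M) != Hv S.
Proof.
case/qmoves_facts => hne huM hj hs.
rewrite /Hv; move EK: (hmax (qresult S M)) => K; move Ek: (hmax S) => k.
have hk1 : 1 <= k.
  have [j hjM] : exists j, j \in M by case: M hne {hj huM hs EK} => // j ? _; exists j; exact: mem_head.
  by have := hj j hjM; rewrite Ek; lia.
have hkS : k \in S by rewrite -Ek hmax_pos // Ek.
have hKle : K <= k - 1.
  rewrite -EK; apply: hmax_le => x /mem_qresult [i [j [hi hjM hji ->]]].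
  have := hmax_ub hi; have := hj j hjM; rewrite Ek; lia.
have hGK := G_le K (K.-1 \in qresult S M).
have [k1|[k2|k3]] : k = 1 \/ k = 2 \/ 3 <= k by lia.
- rewrite {}k1 in Ek hkS hKle hk1 *; have -> : K = 0 by lia.
  by rewrite /G.
- rewrite {}k2 in Ek hkS hKle hk1 *; case Eb: (2.-1 \in S); last first.
    rewrite [G 2 false]/G /=; apply/eqP => e; move: hGK; rewrite e; lia.
  rewrite [G 2 true]/G /=.
  case h1M: (1 \in M).
    have h1T : 1 \in qresult S M by apply/mem_qresult; exists 2, 1.
    have := hmax_ub h1T; rewrite EK => hK1.
    by rewrite (_ : K = 1) //; lia.
  exfalso.
  have h2 : forall j, j \in M -> j = 2.
    move=> j hjM; have := hj j hjM; rewrite Ek => hh.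
    have : j != 1 by apply: contraFneq h1M => <-.
    lia.
  clear EK hGK hKle.
  case: M hne huM hj hs h1M h2 => // j [|j' M] _ huM _ hs h1M h2.
    have hj2 := h2 j (mem_head _ _).
    by move/allP: hs => /(_ 1 Eb); rewrite hj2.
  have e1 := h2 j (mem_head _ _).
  have e2 : j' = 2 by apply: h2; rewrite !inE eqxx orbT.
  by move: huM; rewrite /= inE e1 e2 eqxx.
- rewrite [G k _]G_ge3 //.
  case Eb: (k.-1 \in S); last first.
    apply/eqP => e; move: hGK; rewrite e; lia.
  apply/eqP => e.
  have eK : K = k.-1 by move: hGK; rewrite e; lia.
  have hKT : K \in qresult S M by rewrite -EK hmax_pos // EK; lia.
  have h1M : 1 \in M.
    move/mem_qresult: hKT => [i [j [hi hjM hji ei]]].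
    have := hmax_ub hi; have := hj j hjM; rewrite Ek => ha hb.
    by rewrite (_ : 1 = j) //; lia.
  have hK1 : K.-1 \in qresult S M.
    apply/mem_qresult; exists k.-1, 1; split => //; lia.
  move: e; rewrite hK1 eK.
  case: k k3 {Ek hkS hk1 hKle Eb eK hK1 h1M} => [|[|[|[|k]]]] // _.
  rewrite G_ge3 //=; lia.
Qed.

Lemma main_ind n : forall S : seq nat, hmax S < n -> uniq S -> grundy S = Hv S.
Proof.
elim: n => // n IH S hn uS.
have -> : grundy S = mex [seq Hv (qresult S M) | M <- qmoves S].
  rewrite /grundy /=; congr mex; apply/eq_in_map => M hM.
  have hlt := qmoves_lt hM.
  rewrite fuelE // IH //; first lia.
  exact: undup_uniq.
apply: mexP; first by move=> u; apply: reach.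
apply/mapP => [[M hM]] /eqP; apply/negP; rewrite eq_sym; exact: no_self.
Qed.

Theorem lemma5 (S : seq nat) :
  S != [::] -> uniq S ->
  let k := hmax S in
  grundy S =
    (if perm_eq S [:: 1; 2] || perm_eq S [:: 0; 1; 2] then 0
     else if k == 1 then 1
     else if (k - 1) \in S then k - 1
     else k).
Proof.
move=> _ uS /=; rewrite F_char //; exact: (@main_ind (hmax S).+1).
Qed.
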